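(* Let $n\ge1$, $0\le k\le n$, let $T_1,\dots,T_n$ be i.i.d. with continuous distribution function $F$, with order statistics $T_{(1)}\le\dots\le T_{(n)}$ and conventions $T_{(0)}=-\infty$, $T_{(n+1)}=+\infty$, $F(-\infty)=0$, $F(+\infty)=1$. Define $y_0=1-F(T_{(k)})$, $z_0=1-F(T_{(k+1)})$, $y_1=F(T_{(k+1)})$, $z_1=F(T_{(k)})$. Then for every $\varepsilon>0$: $$P\Big(y_0>\tfrac{n-k+1}{n+1}+\varepsilon\Big)\le e^{-2n(\varepsilon+\frac{k}{n(n+1)})^2},\qquad P\Big(z_0<\tfrac{n-k}{n+1}-\varepsilon\Big)\le e^{-2n(\varepsilon+\frac{n-k}{n(n+1)})^2},$$ $$P\Big(y_1>\tfrac{k+1}{n+1}+\varepsilon\Big)\le e^{-2n(\varepsilon+\frac{n-k}{n(n+1)})^2},\qquad P\Big(z_1<\tfrac{k}{n+1}-\varepsilon\Big)\le e^{-2n(\varepsilon+\frac{k}{n(n+1)})^2}.$$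
   Context: In the paper these quantities bound the false positive rate (using the class-0 sample, $y_0,z_0$) and false negative rate (using the class-1 sample, $y_1,z_1$) of the THORS threshold lying between consecutive order statistics $T_{(k)}$ and $T_{(k+1)}$. *)

(* Defs.v *)
From HB Require Import structures.
From mathcomp Require Import all_boot all_order all_algebra.
From mathcomp Require Import all_classical all_reals all_analysis.
Set Implicit Arguments. Unset Strict Implicit. Unset Printing Implicit Defensive.
Import Order.TTheory GRing.Theory Num.Theory numFieldNormedType.Exports.
Local Open Scope classical_set_scope.
Local Open Scope ring_scope.

Definition mutually_independent d (T : measurableType d) (R : realType)
  (P : probability T R) (n : nat) (X : 'I_n -> {RV P >-> R}) : Prop :=
  forall (J : {set 'I_n}) (B : 'I_n -> set R),
    (forall i, measurable (B i)) ->
    P (\bigcap_(i in [set i | i \in J]) (X i @^-1` B i)) =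
    (\prod_(i in J) P (X i @^-1` B i))%E.

(* Order statistics of the sample (X_1(w),...,X_n(w)): the values sorted
   increasingly; order_stat X j w = T_(j) for 1 <= j <= n. *)
Definition sorted_sample d (T : measurableType d) (R : realType)
  (P : probability T R) (n : nat) (X : 'I_n -> {RV P >-> R}) (w : T) : seq R :=
  sort <=%R [seq X i w | i <- enum 'I_n].

Definition order_stat d (T : measurableType d) (R : realType)
  (P : probability T R) (n : nat) (X : 'I_n -> {RV P >-> R}) (j : nat) (w : T) : R :=
  nth 0 (sorted_sample X w) j.-1.

(* F(T_(j)) with the conventions T_(0) = -oo, T_(n+1) = +oo,
   F(-oo) = 0, F(+oo) = 1. *)
Definition F_order_stat d (T : measurableType d) (R : realType)
  (P : probability T R) (n : nat) (X : 'I_n -> {RV P >-> R}) (F : R -> R)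
  (j : nat) (w : T) : R :=
  if j == 0%N then 0 else if j == n.+1 then 1 else F (order_stat X j w).

(* Main.v *)
Require Import Defs.
From HB Require Import structures.
From mathcomp Require Import all_boot all_order all_algebra.
From mathcomp Require Import all_classical all_reals all_analysis.
From mathcomp Require Import ring lra zify.
Import Order.TTheory GRing.Theory Num.Theory numFieldNormedType.Exports.
Local Open Scope classical_set_scope.
Local Open Scope ring_scope.

Section H.
Context {R : realType}.

Lemma D_gt0 (p s : R) : 0 <= p <= 1 -> 0 < 1 - p + p * expR s.
Proof.
move=> /andP[p0 p1]; have e0 := expR_gt0 s.
have [ph|ph] := lerP p (1/2); first by have := mulr_ge0 p0 (ltW e0); lra.
by have := mulr_gt0 (_ : 0 < p) e0; lra.
Qed.

Lemma dD (p x : R) : is_derive x 1 (fun s => 1 - p + p * expR s) (p * expR x).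
Proof.
have -> : (fun s => 1 - p + p * expR s) = cst (1 - p) + (cst p * expR).
  by apply/funext => s.
apply: is_derive_eq; rewrite /GRing.scale /=; lra.
Qed.

Lemma aux (a b : R) : 0 < a + b -> a * b / (a + b) ^+ 2 <= 1 / 4.
Proof.
move=> h; rewrite ler_pdivrMr ?exprn_gt0 //.
have : 0 <= (a - b) ^+ 2 by apply: sqr_ge0.
rewrite !expr2; nra.
Qed.

Definition kk (p : R) := fun s : R => s / 4 + p - p * expR s / (1 - p + p * expR s).

Lemma dk (p x : R) : 0 <= p <= 1 ->
  is_derive x 1 (kk p)
   (1/4 - p * (1 - p) * expR x / (1 - p + p * expR x) ^+ 2).
Proof.
move=> hp.
have Dn : 1 - p + p * expR x != 0 by rewrite gt_eqF // D_gt0.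
have hV := @is_deriveV R (fun s => 1 - p + p * expR s) x _ _ Dn (dD p x).
have -> : kk p = id * cst (4^-1) + cst p - (cst p * expR) * (fun s => (1 - p + p * expR s)^-1).
  by apply/funext => s; rewrite /kk /=.
apply: is_derive_eq.
rewrite /=.
rewrite /GRing.scale /=.
have -> : (cst p * expR) x = p * expR x by [].
have key : forall E : R, 1 - p + p * E != 0 ->
  x * 0 + 4^-1 * 1 + 0 - (p * E * (- (1 - p + p * E) ^- 2 * (p * E)) +
   (1 - p + p * E)^-1 * (p * E + E * 0)) =
  1 / 4 - p * (1 - p) * E / (1 - p + p * E) ^+ 2.
  by move=> E EN; field.
exact: key.
Qed.

Lemma kk_ge0 (p s : R) : 0 <= p <= 1 -> 0 <= s -> 0 <= kk p s.
Proof.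
move=> hp s0.
have k0 : kk p 0 = 0.
  by rewrite /kk expR0 mulr1 mul0r add0r subrK divr1 subrr.
have h1 : forall x, x \in `]0, s[ -> derivable (kk p) x 1.
  by move=> x _; by case: (dk p x hp).
have h2 : forall x, x \in `]0, s[ -> 0 <= (kk p)^`()%classic x.
  move=> x _; rewrite derive1E; have [_ ->] := dk p x hp.
  have D0 := D_gt0 p x hp.
  rewrite subr_ge0 (_ : p * (1 - p) * expR x = (1 - p) * (p * expR x)); last by ring.
  exact: aux.
have h3 : {within `[0, s], continuous (kk p)}.
  apply: derivable_within_continuous => x _; by case: (dk p x hp).
rewrite -k0; exact: (ger0_derive1_ndecr h1 h2 h3 (lexx 0) s0 (lexx s)).
Qed.

Definition GG (p : R) := fun s : R => s * p + s ^+ 2 / 8 - ln (1 - p + p * expR s).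

Lemma dG (p x : R) : 0 <= p <= 1 -> is_derive x 1 (GG p) (kk p x).
Proof.
move=> hp.
have D0 := D_gt0 p x hp.
have hl : is_derive x 1 ((@ln R) \o (fun s => 1 - p + p * expR s))
   ((1 - p + p * expR x)^-1 * (p * expR x)).
  apply: is_derive1_comp; last exact: dD.
  exact: is_derive1_ln.
have -> : GG p = id * cst p + (id ^+ 2) * cst (8^-1) - ((@ln R) \o (fun s => 1 - p + p * expR s)).
  by apply/funext => s; rewrite /GG /=.
apply: is_derive_eq.
rewrite /kk /GRing.scale /=.
have key : forall y E D : R, D != 0 ->
  x * 0 + p * 1 + (y * 0 + 8^-1 * (2 * x ^+ 1 * 1)) - D^-1 * (p * E) =
  x / 4 + p - p * E / D.
  by move=> y E D DN; field.
exact: (key _ _ _ (lt0r_neq0 D0)).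
Qed.

Lemma hoeffding_lemma (p s : R) : 0 <= p <= 1 -> 0 <= s ->
  1 - p + p * expR s <= expR (s * p + s ^+ 2 / 8).
Proof.
move=> hp s0.
have G0 : 0 <= GG p s.
  have k0 : GG p 0 = 0.
    by rewrite /GG expR0 mulr1 subrK ln1 mul0r expr0n /= mul0r !addr0 subr0.
  have h1 : forall x, x \in `]0, s[ -> derivable (GG p) x 1.
    by move=> x _; case: (dG p x hp).
  have h2 : forall x, x \in `]0, s[ -> 0 <= (GG p)^`()%classic x.
    move=> x; rewrite in_itv /= => /andP[x0 _].
    rewrite derive1E; have [_ ->] := dG p x hp.
    by rewrite kk_ge0 // ltW.
  have h3 : {within `[0, s], continuous (GG p)}.
    apply: derivable_within_continuous => x _; by case: (dG p x hp).
  rewrite -k0; exact: (ger0_derive1_ndecr h1 h2 h3 (lexx 0) s0 (lexx s)).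
rewrite -[X in X <= _]lnK; last by rewrite posrE D_gt0.
by rewrite ler_expR; move: G0; rewrite /GG subr_ge0.
Qed.

End H.

Section C.
Context {R : realType}.

Lemma chern (n m : nat) (p : 'I_n -> R) (a s : R) :
  (forall i, 0 <= p i <= 1) -> (forall i, p i <= a) -> 0 <= s ->
  \sum_(f : {ffun 'I_n -> bool} | (m <= \sum_i (f i : nat))%N)
     \prod_i (if f i then p i else 1 - p i)
  <= expR (- s * m%:R + n%:R * (s * a + s ^+ 2 / 8)).
Proof.
move=> p01 pa s0.
pose G i (b : bool) := if b then p i * expR s else 1 - p i.
pose t (f : {ffun 'I_n -> bool}) := \prod_i (if f i then p i else 1 - p i).
have t0 f : 0 <= t f.
  apply: prodr_ge0 => i _; case: (f i); have := p01 i; lra.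
have tE f : t f * expR (s * ((\sum_i (f i : nat))%:R - m%:R))
    = expR (- s * m%:R) * \prod_i G i (f i).
  rewrite mulrBr expRD natr_sum mulr_sumr expR_sum mulNr mulrA [RHS]mulrC.
  congr (_ * _); rewrite /t -big_split /=.
  by apply: eq_bigr => i _; rewrite /G; case: (f i); rewrite ?mulr1 ?mulr0 ?expR0 ?mulr1.
apply: (@le_trans _ _ (\sum_(f : {ffun 'I_n -> bool}) t f * expR (s * ((\sum_i (f i : nat))%:R - m%:R)))).
  rewrite [X in _ <= X](bigID (fun f : {ffun 'I_n -> bool} => (m <= \sum_i (f i : nat))%N)) /=.
  rewrite -[X in X <= _]addr0; apply: lerD.
    apply: ler_sum => f hf; rewrite -[X in X <= _]mulr1 -/(t f).
    apply: ler_wpM2l => //; rewrite -[X in X <= expR _]expR0 ler_expR.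
    by apply: mulr_ge0 => //; rewrite subr_ge0 ler_nat.
  rewrite sumr_ge0 // => f _; rewrite mulr_ge0 // expR_ge0.
under eq_bigr do rewrite tE.
rewrite -mulr_sumr -bigA_distr_bigA /= expRD; apply: ler_wpM2l; first exact: expR_ge0.
have -> : n%:R * (s * a + s ^+ 2 / 8) = \sum_(i < n) (s * a + s ^+ 2 / 8).
  by rewrite sumr_const card_ord mulr_natl.
rewrite expR_sum.
apply: ler_prod => i _; rewrite big_bool /G /=.
have := p01 i; move=> /andP[p0 p1]; rewrite [_ + (1 - p i)]addrC.
apply/andP; split; first by have := D_gt0 (p i) s (p01 i); lra.
apply: le_trans (hoeffding_lemma (p i) s (p01 i) s0) _.
by rewrite ler_expR lerD2r ler_wpM2l.
Qed.
End C.

Lemma union_bound d (T : measurableType d) (R : realType)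
  (mu : {measure set T -> \bar R}) (I : Type) (r : seq I) (Pr : pred I)
  (F : I -> set T) : (forall i, measurable (F i)) ->
  (mu (\big[setU/set0]_(i <- r | Pr i) F i) <= \sum_(i <- r | Pr i) mu (F i))%E.
Proof.
move=> mF; elim: r => [|i r IH]; first by rewrite !big_nil measure0.
rewrite !big_cons; case: (Pr i) => //.
apply: le_trans (measureU2 _ _ _) _.
- exact: mF.
- by apply: bigsetU_measurable => j _; exact: mF.
- exact: leeD2l.
Qed.

Lemma prob_count d (T : measurableType d) (R : realType) (P : probability T R)
  (n m : nat) (X : 'I_n -> {RV P >-> R}) (b : R -> bool) :
  mutually_independent X -> measurable [set x | b x] ->
  (P [set w | (m <= \sum_(i < n) (b (X i w) : nat))%N] <=
   (\sum_(f : {ffun 'I_n -> bool} | (m <= \sum_i (f i : nat))%N)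
      \prod_i (if f i then fine (P (X i @^-1` [set x | b x]))
               else 1 - fine (P (X i @^-1` [set x | b x]))))%:E)%E.
Proof.
move=> ind mB.
set B := [set x | b x].
pose Bf (f : {ffun 'I_n -> bool}) i := if f i then B else ~` B.
pose E (f : {ffun 'I_n -> bool}) :=
  \bigcap_(i in [set i | i \in [set: 'I_n]%SET]) (X i @^-1` Bf f i).
have mBf f i : measurable (Bf f i) by rewrite /Bf; case: (f i) => //; exact: measurableC.
have mE f : measurable (E f).
  apply: fin_bigcap_measurable; first exact: finite_finset.
  move=> i _; exact: measurable_funPTI.
have PE f : P (E f) = (\prod_i (if f i then fine (P (X i @^-1` B))
               else 1 - fine (P (X i @^-1` B))))%:E.
  rewrite /E (ind [set: 'I_n]%SET (Bf f)) // -prodEFin.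
  apply: eq_big => [i|i _]; first by rewrite inE.
  have mA : measurable (X i @^-1` B) by exact: measurable_funPTI.
  have fA : P (X i @^-1` B) \is a fin_num by rewrite fin_num_measure.
  rewrite /Bf; case: (f i); first by rewrite fineK.
  by rewrite preimage_setC probability_setC // EFinB fineK.
have -> : [set w | (m <= \sum_(i < n) (b (X i w) : nat))%N] =
    \big[setU/set0]_(f : {ffun 'I_n -> bool} | (m <= \sum_i (f i : nat))%N) E f.
  rewrite -bigcup_seq_cond; apply/seteqP; split => w /=.
  - move=> h; exists [ffun i => b (X i w)].
      rewrite /= mem_index_enum /=.
      by under eq_bigr do rewrite ffunE.
    move=> i _; rewrite /Bf ffunE /B /=; case: ifP => //= ->; by [].
  - move=> [f /andP[_ hf]] hw.
    have eq i : b (X i w) = f i.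
      have := hw i; rewrite /= inE => /(_ isT); rewrite /Bf /B.
      by case: (f i) => //= /negP /negbTE.
    by under eq_bigr do rewrite eq.
rewrite -sumEFin.
have H := @union_bound _ _ _ P _ (index_enum {ffun 'I_n -> bool}) (fun f : {ffun 'I_n -> bool} => (m <= \sum_i (f i : nat))%N) E mE.
apply: le_trans H _.
rewrite le_eqVlt; apply/orP; left; apply/eqP.
by apply: eq_bigr => f _; exact: PE.
Qed.

Section CDF.
Context d (T : measurableType d) (R : realType) (P : probability T R).
Variables (X : {RV P >-> R}) (F : R -> R).
Hypothesis hF : forall r, cdf X r = (F r)%:E.
Hypothesis cF : continuous F.

Lemma F_mono x y : x <= y -> F x <= F y.
Proof. by move=> xy; rewrite -lee_fin -!hF cdf_nondecreasing. Qed.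

Lemma F_ge0 x : 0 <= F x.
Proof. by rewrite -lee_fin -hF cdf_ge0. Qed.

Lemma F_le1 x : F x <= 1.
Proof. by rewrite -lee_fin -hF cdf_le1. Qed.

Lemma F_cvgy : F x @[x --> +oo] --> (1 : R).
Proof.
have := @cvg_cdfy1 _ _ _ P X.
have -> : cdf X = (fun r => (F r)%:E) by apply/funext.
by move/fine_cvg.
Qed.

Lemma F_cvgNy : F x @[x --> -oo] --> (0 : R).
Proof.
have := @cvg_cdfNy0 _ _ _ P X.
have -> : cdf X = (fun r => (F r)%:E) by apply/funext.
by move/fine_cvg.
Qed.

Lemma F_hit v : 0 < v < 1 -> exists c, F c = v.
Proof.
move=> /andP[v0 v1].
have h1 := cvgr_gt 1 F_cvgy v v1.
have h0 := cvgr_lt 0 F_cvgNy v v0.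
have [M1 [_ HM1]] := h1.
have [M0 [_ HM0]] := h0.
have hx1 : v < F (M1 + 1) by apply: HM1; lra.
have hx0 : F (M0 - 1) < v by apply: HM0; lra.
have lt01 : M0 - 1 <= M1 + 1.
  rewrite leNgt; apply/negP => h; have := F_mono _ _ (ltW h); lra.
have hv : Num.min (F (M0 - 1)) (F (M1 + 1)) <= v <= Num.max (F (M0 - 1)) (F (M1 + 1)).
  apply/andP; split; first by rewrite ge_min (ltW hx0).
  by rewrite le_max (ltW hx1) orbT.
have [c _ Fc] := @IVT R F (M0 - 1) (M1 + 1) v lt01
   (continuous_subspaceT (fun x => cF x)) hv.
by exists c.
Qed.
Lemma mFpre Y : measurable Y -> measurable (F @^-1` Y).
Proof.
move=> mY.
by have := measurable_realfun.continuous_measurable_fun cF measurableT mY; rewrite setTI.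
Qed.

Lemma mlt a : measurable [set x | F x < a].
Proof.
have -> : [set x | F x < a] = F @^-1` `]-oo, a[.
  by apply/seteqP; split => x /=; rewrite in_itv /= ?andbT; exact: id.
apply: mFpre; exact: measurable_itv.
Qed.

Lemma mgt a : measurable [set x | a < F x].
Proof.
have -> : [set x | a < F x] = F @^-1` `]a, +oo[.
  by apply/seteqP; split => x /=; rewrite in_itv /= ?andbT; exact: id.
apply: mFpre; exact: measurable_itv.
Qed.

Lemma pfine01 (A : set T) : measurable A -> 0 <= fine (P A) <= 1.
Proof.
move=> mA; have fA : P A \is a fin_num by rewrite fin_num_measure.
by rewrite -!lee_fin fineK // measure_ge0 probability_le1.
Qed.

Lemma plt_bound a : 0 < a -> fine (P (X @^-1` [set x | F x < a])) <= a.
Proof.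
move=> a0.
have mA : measurable (X @^-1` [set x | F x < a]) by apply: measurable_funPTI; exact: mlt.
have [a1|a1] := leP 1 a.
  by have /andP[_ h] := pfine01 _ mA; apply: le_trans h a1.
have [c Fc] : exists c, F c = a by apply: F_hit; rewrite a0 a1.
have fA : P (X @^-1` [set x | F x < a]) \is a fin_num by rewrite fin_num_measure.
subst a.
rewrite -lee_fin fineK // -hF /cdf /distribution /pushforward /=.
apply: le_measure; rewrite ?inE //.
  by apply: measurable_funPTI; exact: measurable_itv.
move=> w /= h; rewrite in_itv /= leNgt; apply/negP => cw.
have := F_mono _ _ (ltW cw); lra.
Qed.

Lemma pgt_bound b : 0 < b < 1 -> fine (P (X @^-1` [set x | b < F x])) <= 1 - b.
Proof.
move=> hb.
have mA : measurable (X @^-1` [set x | b < F x]) by apply: measurable_funPTI; exact: mgt.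
have [c Fc] := F_hit _ hb.
have fA : P (X @^-1` [set x | b < F x]) \is a fin_num by rewrite fin_num_measure.
subst b.
rewrite -lee_fin fineK // EFinB -hF -ccdf_1_cdf /ccdf /distribution /pushforward /=.
apply: le_measure; rewrite ?inE //.
  by apply: measurable_funPTI; exact: measurable_itv.
move=> w /= h; rewrite in_itv /= andbT ltNge; apply/negP => cw.
have := F_mono _ _ cw; lra.
Qed.
End CDF.

Lemma sum_count n (p : pred 'I_n) : (\sum_(i < n) (p i : nat) = count p (enum 'I_n))%N.
Proof.
rewrite -sum1_count big_enum_cond /= [RHS]big_mkcond /=; apply: eq_bigr => i _.
by case: (p i).
Qed.

Section OS.
Context {R : realType}.

Lemma cnt_lt (s : seq R) (G : R -> R) (a : R) (k : nat) :
  {homo G : x y / x <= y} -> sorted <=%R s -> (0 < k <= size s)%N ->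
  G (nth 0 s k.-1) < a -> (k <= count (fun x => (G x < a)%R) s)%N.
Proof.
move=> Gm ss /andP[k0 ks] h.
rewrite -(cat_take_drop k s) count_cat.
apply: leq_trans (leq_addr _ _).
have : all (fun x => G x < a) (take k s).
  apply/(all_nthP 0) => i; rewrite size_takel // => ik.
  rewrite nth_take //; apply: le_lt_trans h; apply: Gm.
  apply: (sorted_leq_nth le_trans lexx) => //; rewrite ?inE /=; lia.
by rewrite all_count => /eqP ->; rewrite size_takel.
Qed.

Lemma cnt_gt (s : seq R) (G : R -> R) (b : R) (j : nat) :
  {homo G : x y / x <= y} -> sorted <=%R s -> (0 < j <= size s)%N ->
  b < G (nth 0 s j.-1) -> (size s - j.-1 <= count (fun x => (b < G x)%R) s)%N.
Proof.
move=> Gm ss /andP[j0 js] h.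
case: j j0 js h => // j _ js h /=.
rewrite -[X in count _ X](cat_take_drop j s) count_cat.
apply: leq_trans (leq_addl _ _).
have : all (fun x => b < G x) (drop j s).
  apply/(all_nthP 0) => i; rewrite size_drop => ik.
  rewrite nth_drop; apply: lt_le_trans h _; apply: Gm.
  apply: (sorted_leq_nth le_trans lexx) => //; rewrite ?inE /=.
  - by rewrite -ltn_subRL.
  - exact: leq_addr.
by rewrite all_count => /eqP ->; rewrite size_drop.
Qed.
Lemma cnt_lt_iff (s : seq R) (G : R -> R) (a : R) (k : nat) :
  {homo G : x y / x <= y} -> sorted <=%R s -> (0 < k <= size s)%N ->
  (G (nth 0 s k.-1) < a) = (k <= count (fun x => (G x < a)%R) s)%N.
Proof.
move=> Gm ss hk; apply/idP/idP; first exact: cnt_lt.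
move: hk => /andP[k0 ks].
case: k k0 ks => // k _ ks /=.
apply: contraLR; rewrite -leNgt -ltnNge ltnS => h.
rewrite -[X in count _ X](cat_take_drop k s) count_cat.
have : all (fun x => ~~ (G x < a)) (drop k s).
  apply/(all_nthP 0) => i; rewrite size_drop => ik.
  rewrite nth_drop -leNgt; apply: le_trans h _; apply: Gm.
  apply: (sorted_leq_nth le_trans lexx) => //; rewrite ?inE /=.
  - by rewrite -ltn_subRL.
  - exact: leq_addr.
rewrite all_predC => /hasPn hn.
rewrite (_ : count _ (drop k s) = 0%N); last first.
  by apply/eqP; rewrite -leqn0 leqNgt -has_count; apply/hasP => -[x /hn /negP].
rewrite addn0; apply: leq_trans (count_size _ _) _.
by rewrite size_take; case: ifP => // /negbT; rewrite -leqNgt.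
Qed.

Lemma cnt_gt_iff (s : seq R) (G : R -> R) (b : R) (j : nat) :
  {homo G : x y / x <= y} -> sorted <=%R s -> (0 < j <= size s)%N ->
  (b < G (nth 0 s j.-1)) = (size s - j.-1 <= count (fun x => (b < G x)%R) s)%N.
Proof.
move=> Gm ss hj; apply/idP/idP; first exact: cnt_gt.
move: hj => /andP[j0 js].
case: j j0 js => // j _ js /=.
apply: contraLR; rewrite -leNgt -ltnNge => h.
rewrite -[X in count _ X](cat_take_drop j.+1 s) count_cat.
have : all (fun x => ~~ (b < G x)) (take j.+1 s).
  apply/(all_nthP 0) => i; rewrite size_takel // => ik.
  rewrite nth_take // -leNgt; apply: le_trans _ h; apply: Gm.
  have ij : (i <= j)%N by [].
  apply: (sorted_leq_nth le_trans lexx) => //; rewrite ?inE /=.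
  exact: leq_ltn_trans ij js.
rewrite all_predC => /hasPn hn.
rewrite (_ : count _ (take j.+1 s) = 0%N); last first.
  by apply/eqP; rewrite -leqn0 leqNgt -has_count; apply/hasP => -[x /hn /negP].
rewrite add0n; apply: leq_ltn_trans (count_size _ _) _.
rewrite size_drop; rewrite -subSn //; exact: leq_subr.
Qed.
End OS.


Lemma sample_size {d} {T : measurableType d} {R : realType} {P : probability T R}
  {n : nat} (X : 'I_n -> {RV P >-> R}) w : size (sorted_sample X w) = n.
Proof. by rewrite /sorted_sample size_sort size_map size_enum_ord. Qed.

Lemma sample_sorted {d} {T : measurableType d} {R : realType} {P : probability T R}
  {n : nat} (X : 'I_n -> {RV P >-> R}) w : sorted <=%R (sorted_sample X w).
Proof. exact: (sort_sorted le_total). Qed.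

Lemma sample_count {d} {T : measurableType d} {R : realType} {P : probability T R}
  {n : nat} (X : 'I_n -> {RV P >-> R}) w (p : pred R) :
  count p (sorted_sample X w) = (\sum_(i < n) (p (X i w) : nat))%N.
Proof. by rewrite /sorted_sample count_sort count_map sum_count. Qed.

Lemma lowerA d (T : measurableType d) (R : realType)
  (P : probability T R) (n : nat) (X : 'I_n -> {RV P >-> R}) (F : R -> R)
  (k : nat) (eps : R) :
  (1 <= n)%N -> (0 < k <= n)%N ->
  mutually_independent X ->
  (forall i r, cdf (X i) r = (F r)%:E) ->
  continuous F -> 0 < eps ->
  (P [set w | F_order_stat X F k w < k%:R / (n%:R + 1) - eps]%R
     <= (expR (- (2 * n%:R) * (eps + k%:R / (n%:R * (n%:R + 1))) ^+ 2))%:E)%E.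
Proof.
move=> n1 hk ind hF cF e0.
have i0 : 'I_n := Ordinal n1.
set a := k%:R / (n%:R + 1) - eps.
have Fm : {homo F : x y / x <= y} by move=> x y; exact: (@F_mono _ _ _ _ _ _ (hF i0)).
have F0 x : 0 <= F x by exact: (@F_ge0 _ _ _ _ _ _ (hF i0)).
have Fos w : F_order_stat X F k w = F (order_stat X k w).
  move: (hk) => /andP[k0 kn].
  by rewrite /F_order_stat gtn_eqF // ltn_eqF ?ltnS.
have key w : (F_order_stat X F k w < a) =
    (k <= \sum_(i < n) ((F (X i w) < a)%R : nat))%N.
  rewrite Fos.
  rewrite /order_stat (cnt_lt_iff _ _ _ _ Fm (sample_sorted X w)) ?sample_size //.
  by rewrite sample_count.
have [a0|a0] := leP a 0.
  have -> : [set w | F_order_stat X F k w < a] = set0.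
    apply/seteqP; split => w //=; rewrite Fos => h.
    have := F0 (order_stat X k w); lra.
  by rewrite measure0 lee_fin expR_ge0.
have -> : [set w | F_order_stat X F k w < a] =
   [set w | (k <= \sum_(i < n) ((fun x => (F x < a)%R) (X i w) : nat))%N].
  by apply/seteqP; split => w /=; rewrite key.
apply: le_trans (@prob_count _ _ _ P n k X (fun x => (F x < a)%R) ind (@mlt _ F cF a)) _.
rewrite lee_fin.
set tau := eps + k%:R / (n%:R * (n%:R + 1)).
have tau0 : 0 <= tau.
  by rewrite /tau; apply: addr_ge0; [exact: ltW|]; apply: divr_ge0 => //; apply: mulr_ge0 => //; apply: addr_ge0.
apply: le_trans (@chern _ n k _ a (4 * tau) _ _ _) _.
- move=> i; apply: (@pfine01 _ _ _ P); apply: measurable_funPTI; exact: mlt.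
- move=> i; exact: (@plt_bound _ _ _ _ _ _ (hF i) cF a a0).
- by apply: mulr_ge0.
rewrite ler_expR le_eqVlt; apply/orP; left; apply/eqP.
rewrite /a /tau; field.
have nn : n%:R != 0 :> R by rewrite pnatr_eq0 -lt0n.
have nn1 : n%:R + 1 != 0 :> R.
  by rewrite gt_eqF //; have := ler0n R n; lra.
by rewrite nn nn1.
Qed.

Lemma upperB d (T : measurableType d) (R : realType)
  (P : probability T R) (n : nat) (X : 'I_n -> {RV P >-> R}) (F : R -> R)
  (k : nat) (eps : R) :
  (1 <= n)%N -> (k < n)%N ->
  mutually_independent X ->
  (forall i r, cdf (X i) r = (F r)%:E) ->
  continuous F -> 0 < eps ->
  (P [set w | (k%:R + 1) / (n%:R + 1) + eps < F_order_stat X F k.+1 w]%R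
     <= (expR (- (2 * n%:R) * (eps + (n%:R - k%:R) / (n%:R * (n%:R + 1))) ^+ 2))%:E)%E.
Proof.
move=> n1 kn ind hF cF e0.
have i0 : 'I_n := Ordinal n1.
set b := (k%:R + 1) / (n%:R + 1) + eps.
have Fm : {homo F : x y / x <= y} by move=> x y; exact: (@F_mono _ _ _ _ _ _ (hF i0)).
have F1 x : F x <= 1 by exact: (@F_le1 _ _ _ _ _ _ (hF i0)).
have Fos w : F_order_stat X F k.+1 w = F (order_stat X k.+1 w).
  by rewrite /F_order_stat /= eqSS ltn_eqF.
have key w : (b < F_order_stat X F k.+1 w) =
    (n - k <= \sum_(i < n) ((b < F (X i w))%R : nat))%N.
  rewrite Fos.
  rewrite /order_stat (cnt_gt_iff _ _ _ _ Fm (sample_sorted X w)) ?sample_size //.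
  by rewrite sample_count.
have nn : n%:R != 0 :> R by rewrite pnatr_eq0 -lt0n.
have nn1 : n%:R + 1 != 0 :> R.
  by rewrite gt_eqF //; have := ler0n R n; lra.
have b0 : 0 < b.
  have hk : (0:R) <= k%:R := ler0n _ _.
  have hn : (0:R) <= n%:R := ler0n _ _.
  have : 0 < (k%:R + 1) / (n%:R + 1) :> R by apply: divr_gt0; lra.
  rewrite /b; lra.
have [b1|b1] := leP 1 b.
  have -> : [set w | b < F_order_stat X F k.+1 w] = set0.
    apply/seteqP; split => w //=; rewrite Fos => h.
    have := F1 (order_stat X k.+1 w); lra.
  by rewrite measure0 lee_fin expR_ge0.
have -> : [set w | b < F_order_stat X F k.+1 w] =
   [set w | (n - k <= \sum_(i < n) ((fun x => (b < F x)%R) (X i w) : nat))%N].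
  by apply/seteqP; split => w /=; rewrite key.
apply: le_trans (@prob_count _ _ _ P n (n - k) X (fun x => (b < F x)%R) ind (@mgt _ F cF b)) _.
rewrite lee_fin.
set tau := eps + (n%:R - k%:R) / (n%:R * (n%:R + 1)).
have tau0 : 0 <= tau.
  rewrite /tau; apply: addr_ge0; [exact: ltW|]; apply: divr_ge0.
    by rewrite subr_ge0 ler_nat ltnW.
  by apply: mulr_ge0 => //; apply: addr_ge0.
apply: le_trans (@chern _ n (n - k) _ (1 - b) (4 * tau) _ _ _) _.
- move=> i; apply: (@pfine01 _ _ _ P); apply: measurable_funPTI; exact: mgt.
- move=> i; apply: (@pgt_bound _ _ _ _ _ _ (hF i) cF b); by rewrite b0 b1.
- by apply: mulr_ge0.
rewrite ler_expR le_eqVlt; apply/orP; left; apply/eqP.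
rewrite natrB; last exact: ltnW.
rewrite /b /tau; field.
by rewrite nn nn1.
Qed.

Theorem mainTheorem5 (d : measure_display) (T : measurableType d) (R : realType)
  (P : probability T R) (n : nat) (X : 'I_n -> {RV P >-> R}) (F : R -> R)
  (k : nat) (eps : R) :
  (1 <= n)%N -> (k <= n)%N ->
  mutually_independent X ->
  (forall i r, cdf (X i) r = (F r)%:E) ->
  continuous F ->
  0 < eps ->
  let y0 := fun w => 1 - F_order_stat X F k w in
  let z0 := fun w => 1 - F_order_stat X F k.+1 w in
  let y1 := fun w => F_order_stat X F k.+1 w in
  let z1 := fun w => F_order_stat X F k w in
  let nr : R := n%:R in
  let kr : R := k%:R in
  [/\ (P [set w | y0 w > (nr - kr + 1) / (nr + 1) + eps]%R
        <= (expR (- (2 * nr) * (eps + kr / (nr * (nr + 1))) ^+ 2)%R)%:E)%E,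
      (P [set w | z0 w < (nr - kr) / (nr + 1) - eps]%R
        <= (expR (- (2 * nr) * (eps + (nr - kr) / (nr * (nr + 1))) ^+ 2)%R)%:E)%E,
      (P [set w | y1 w > (kr + 1) / (nr + 1) + eps]%R
        <= (expR (- (2 * nr) * (eps + (nr - kr) / (nr * (nr + 1))) ^+ 2)%R)%:E)%E &
      (P [set w | z1 w < kr / (nr + 1) - eps]%R
        <= (expR (- (2 * nr) * (eps + kr / (nr * (nr + 1))) ^+ 2)%R)%:E)%E].
Proof.
move=> n1 kn ind hF cF e0 y0 z0 y1 z1 nr kr.
have nn1 : nr + 1 != 0.
  by rewrite gt_eqF //; have := ler0n R n; rewrite /nr; lra.
have eA : (nr - kr + 1) / (nr + 1) = 1 - kr / (nr + 1).
  by field.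
have eB : (nr - kr) / (nr + 1) = 1 - (kr + 1) / (nr + 1).
  by field.
have emp (S : set T) : S = set0 -> (P S <= (expR (- (2 * nr) * (eps + kr / (nr * (nr + 1))) ^+ 2)%R)%:E)%E.
  by move=> ->; rewrite measure0 lee_fin expR_ge0.
have emp' (S : set T) : S = set0 -> (P S <= (expR (- (2 * nr) * (eps + (nr - kr) / (nr * (nr + 1))) ^+ 2)%R)%:E)%E.
  by move=> ->; rewrite measure0 lee_fin expR_ge0.
have [k0|k0] := posnP k.
-
  subst k.
  have Z w : F_order_stat X F 0 w = 0 by [].
  have [n0|nk] := ltnP 0 n; last by rewrite leqn0 in nk; rewrite (eqP nk) in n1.
  split.
  + apply: emp; apply/seteqP; split => w //=.
    rewrite /y0 Z eA /kr mul0r; lra.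
  + have := @upperB _ _ _ P n X F 0 eps n1 n0 ind hF cF e0.
    congr (P _ <= _)%E.
    apply/seteqP; split => w /=; rewrite /z0 eB /kr; lra.
  + exact: (@upperB _ _ _ P n X F 0 eps n1 n0 ind hF cF e0).
  + apply: emp; apply/seteqP; split => w //=.
    rewrite /z1 Z /kr mul0r; lra.
have hk : (0 < k <= n)%N by rewrite k0 kn.
have HA := @lowerA _ _ _ P n X F k eps n1 hk ind hF cF e0.
have y0E : [set w | y0 w > (nr - kr + 1) / (nr + 1) + eps]%R =
           [set w | F_order_stat X F k w < k%:R / (n%:R + 1) - eps]%R.
  by apply/seteqP; split => w /=; rewrite /y0 eA /kr /nr; lra.
have [kn'|kn'] := ltnP k n.
- have HB := @upperB _ _ _ P n X F k eps n1 kn' ind hF cF e0.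
  split.
  + by rewrite y0E.
  + have -> : [set w | z0 w < (nr - kr) / (nr + 1) - eps]%R =
           [set w | (k%:R + 1) / (n%:R + 1) + eps < F_order_stat X F k.+1 w]%R.
      by apply/seteqP; split => w /=; rewrite /z0 eB /kr /nr; lra.
    exact: HB.
  + exact: HB.
  + exact: HA.
- have kE : k = n by apply/eqP; rewrite eqn_leq kn kn'.
  have O w : F_order_stat X F k.+1 w = 1 by rewrite /F_order_stat kE eqxx.
  have knr : kr = nr by rewrite /kr /nr kE.
  split.
  + by rewrite y0E.
  + apply: emp'; apply/seteqP; split => w //=.
    rewrite /z0 O knr subrr ?mul0r ?div0r; lra.
  + apply: emp'; apply/seteqP; split => w //=.
    rewrite /y1 O knr divff //; lra.
  + exact: HA.
Qed.
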